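(* Consider the fast-slow system $\dot u = w$, $\dot v = u$, $\varepsilon \dot w = z$, $\varepsilon \dot z = \tfrac12(w^3-w)-v$ at $\varepsilon=0$, with Hamiltonian $H(u,v,w,z)=\tfrac18(4u^2-8vw-2w^2+w^4-4z^2)$. For $\mu\in\mathbb R$ there exists a singular periodic orbit $\gamma_0^\mu\subset\{H=\mu\}$ consisting of precisely two slow segments (trajectories of the reduced problem of positive length) and two fast segments (heteroclinic orbits of the layer problem), with slow segments lying entirely in $\mathcal C_{0,l}$ and $\mathcal C_{0,r}$, if and only if \[ \mu\in I_\mu:=\left(-\tfrac18,\ \tfrac1{24}\right). \]
   Context: Critical manifold: $\mathcal C_0=\{z=0,\ v=\tfrac12(w^3-w)\}$; $\mathcal C_{0,l}=\mathcal C_0\cap\{w<-1/\sqrt3\}$, $\mathcal C_{0,r}=\mathcal C_0\cap\{w>1/\sqrt3\}$. Reduced problem: $\dot u=w$, $\dot v=u$ on $\mathcal C_0$. Layer problem: $w'=z$, $z'=\tfrac12(w^3-w)-\bar v$ with $(u,v)=(\bar u,\bar v)$ fixed. A singular periodic orbit is a closed curve obtained by concatenating, alternately, trajectory segments of the reduced problem on $\mathcal C_0\cap\{H=\mu\}$ and heteroclinic orbits of the layer problem whose endpoints (equilibria of the layer problem) coincide with the endpoints of the adjacent slow segments, all lying in the level set $\{H=\mu\}$. *)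

(* Defs.v *)
From Stdlib Require Import Reals.
Open Scope R_scope.

Record pt := mkpt { pu : R; pv : R; pw : R; pz : R }.

Definition H (u v w z : R) : R :=
  / 8 * (4 * u ^ 2 - 8 * v * w - 2 * w ^ 2 + w ^ 4 - 4 * z ^ 2).

Definition Hp (p : pt) : R := H (pu p) (pv p) (pw p) (pz p).

Definition in_C0 (p : pt) : Prop :=
  pz p = 0 /\ pv p = (pw p ^ 3 - pw p) / 2.
Definition in_C0l (p : pt) : Prop := in_C0 p /\ pw p < - (1 / sqrt 3).
Definition in_C0r (p : pt) : Prop := in_C0 p /\ 1 / sqrt 3 < pw p.

Definition reduced_segment (a b : R) (g : R -> pt) : Prop :=
  a < b /\
  forall t, a <= t <= b ->
    in_C0 (g t) /\
    derivable_pt_lim (fun s => pu (g s)) t (pw (g t)) /\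
    derivable_pt_lim (fun s => pv (g s)) t (pu (g t)).

Definition lim_pinfty (f : R -> R) (l : R) : Prop :=
  forall eps, 0 < eps -> exists T, forall t, T <= t -> Rabs (f t - l) < eps.
Definition lim_minfty (f : R -> R) (l : R) : Prop :=
  forall eps, 0 < eps -> exists T, forall t, t <= T -> Rabs (f t - l) < eps.

(* Layer problem with (u,v) = (ub,vb) frozen:  w' = z, z' = (w^3-w)/2 - vb. *)
Definition layer_solution (vb : R) (W Z : R -> R) : Prop :=
  forall t, derivable_pt_lim W t (Z t) /\
            derivable_pt_lim Z t ((W t ^ 3 - W t) / 2 - vb).

Definition layer_equilibrium (vb w z : R) : Prop :=
  z = 0 /\ (w ^ 3 - w) / 2 - vb = 0.

Definition layer_heteroclinic (vb : R) (W Z : R -> R) (wm wp : R) : Prop :=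
  layer_solution vb W Z /\
  layer_equilibrium vb wm 0 /\ layer_equilibrium vb wp 0 /\ wm <> wp /\
  lim_minfty W wm /\ lim_minfty Z 0 /\
  lim_pinfty W wp /\ lim_pinfty Z 0.

(* A singular periodic orbit in {H = mu} consisting of precisely two slow
   segments g1 (in C_{0,l}) and g2 (in C_{0,r}) and two fast segments,
   concatenated as  g1 -> fast1 -> g2 -> fast2 -> g1 (closed curve). *)
Definition singular_periodic_orbit_2slow_2fast (mu : R) : Prop :=
  exists (a1 b1 a2 b2 : R) (g1 g2 : R -> pt)
         (ub1 vb1 ub2 vb2 : R) (W1 Z1 W2 Z2 : R -> R),
    reduced_segment a1 b1 g1 /\ reduced_segment a2 b2 g2 /\
    (forall t, a1 <= t <= b1 -> in_C0l (g1 t)) /\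
    (forall t, a2 <= t <= b2 -> in_C0r (g2 t)) /\
    layer_heteroclinic vb1 W1 Z1 (pw (g1 b1)) (pw (g2 a2)) /\
    pu (g1 b1) = ub1 /\ pv (g1 b1) = vb1 /\
    pu (g2 a2) = ub1 /\ pv (g2 a2) = vb1 /\
    layer_heteroclinic vb2 W2 Z2 (pw (g2 b2)) (pw (g1 a1)) /\
    pu (g2 b2) = ub2 /\ pv (g2 b2) = vb2 /\
    pu (g1 a1) = ub2 /\ pv (g1 a1) = vb2 /\
    (forall t, a1 <= t <= b1 -> Hp (g1 t) = mu) /\
    (forall t, a2 <= t <= b2 -> Hp (g2 t) = mu) /\
    (forall t, H ub1 vb1 (W1 t) (Z1 t) = mu) /\
    (forall t, H ub2 vb2 (W2 t) (Z2 t) = mu).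

(* Main.v *)
Require Import Defs.
From Stdlib Require Import Reals Lra Psatz Ranalysis5.
From Coquelicot Require Import Coquelicot.
Open Scope R_scope.

Lemma s3 : 0 < 1 / sqrt 3 /\ (1/sqrt 3) * (1/sqrt 3) = 1/3.
Proof.
  assert (h:=sqrt_lt_R0 3 ltac:(lra)). assert (h2:=sqrt_sqrt 3 ltac:(lra)).
  split. apply Rdiv_lt_0_compat; lra. replace (1 / sqrt 3 * (1 / sqrt 3)) with (1 / (sqrt 3 * sqrt 3)) by (field; lra). rewrite h2. lra.
Qed.

Lemma C0l_sq p : in_C0l p -> 1/3 < pw p ^ 2 /\ pw p < 0.
Proof. intros [_ h]. destruct s3. split; nra. Qed.
Lemma C0r_sq p : in_C0r p -> 1/3 < pw p ^ 2 /\ 0 < pw p.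
Proof. intros [_ h]. destruct s3. split; nra. Qed.

Lemma H_C0 p : in_C0 p -> 8 * Hp p = 4 * pu p ^ 2 - 3 * pw p ^ 4 + 2 * pw p ^ 2.
Proof. intros [hz hv]. unfold Hp, H. rewrite hz, hv. field. Qed.

Lemma endpoints (A B : pt) : in_C0l A -> in_C0r B -> pu A = pu B -> pv A = pv B ->
  Hp A = Hp B -> pw A = -1 /\ pw B = 1 /\ pv A = 0.
Proof.
  intros hA hB hu hv hH.
  pose proof (C0l_sq _ hA) as [a1 a2]. pose proof (C0r_sq _ hB) as [b1 b2].
  pose proof (H_C0 _ (proj1 hA)) as eA. pose proof (H_C0 _ (proj1 hB)) as eB.
  destruct hA as [[_ vA] _]. destruct hB as [[_ vB] _].
  set (x := pw A) in *. set (y := pw B) in *.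
  assert (e1 : 3 * x^4 - 2 * x^2 = 3 * y^4 - 2*y^2) by (rewrite hu in eA; lra).
  assert (e2 : x^2 = y^2).
  { assert ((x^2 - y^2) * (3*(x^2+y^2) - 2) = 0) by nra.
    destruct (Rmult_integral _ _ H) ; nra. }
  assert (e3 : x = - y) by nra.
  assert (e4 : x^3 - x = y^3 - y) by (rewrite hv in vA; lra).
  assert (x * (x^2 - 1) = 0) by (subst x; nra).
  destruct (Rmult_integral _ _ H); [lra|].
  assert (x = -1) by nra. split; [lra|]. split; [lra|]. rewrite vA. subst x. rewrite H1. lra.
Qed.

Lemma necessity mu : singular_periodic_orbit_2slow_2fast mu -> - (1 / 8) < mu /\ mu < 1 / 24.
Proof.
  intros (a1 & b1 & a2 & b2 & g1 & g2 & ub1 & vb1 & ub2 & vb2 & W1 & Z1 & W2 & Z2 &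
          s1 & s2 & l1 & r2 & _ & u1 & v1 & u1' & v1' & _ & u2 & v2 & u2' & v2' & h1 & h2 & _ & _).
  destruct s1 as [ab1 d1]. destruct s2 as [ab2 d2].
  assert (iA := l1 b1 ltac:(lra)). assert (iB := r2 a2 ltac:(lra)).
  assert (iC := r2 b2 ltac:(lra)). assert (iD := l1 a1 ltac:(lra)).
  destruct (endpoints (g1 b1) (g2 a2) iA iB ltac:(congruence) ltac:(congruence)
     ltac:(rewrite h1, h2; lra)) as [wA [wB vA]].
  destruct (endpoints (g1 a1) (g2 b2) iD iC ltac:(congruence) ltac:(congruence)
     ltac:(rewrite h1, h2; lra)) as [wD [wC vD]].
  assert (eA := H_C0 _ (proj1 iA)). assert (eD := H_C0 _ (proj1 iD)).
  rewrite h1 in eA, eD; try lra. rewrite wA, u1 in eA. rewrite wD, u2' in eD.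
  destruct (MVT_cor2 (fun s => pu (g1 s)) (fun s => pw (g1 s)) a1 b1 ab1
     (fun c hc => proj1 (proj2 (d1 c hc)))) as [c [hc hc']].
  assert (wc := proj2 (C0l_sq _ (l1 c ltac:(lra)))).
  assert (lt : ub1 < ub2).
  { rewrite u1 in hc. rewrite u2' in hc. nra. }
  assert (ub1 = - ub2) by nra.
  assert (pos : 0 < ub2) by lra.
  split; [nra|].
  destruct (IVT_interv (fun s => - pu (g1 s)) a1 b1) as [t [ht ht']].
  - intros a ha. apply continuity_pt_opp. apply derivable_continuous_pt.
    exists (pw (g1 a)). exact (proj1 (proj2 (d1 a ha))).
  - exact ab1.
  - simpl. rewrite u2'. lra.
  - simpl. rewrite u1. lra.
  - assert (iT := l1 t ht). assert (eT := H_C0 _ (proj1 iT)). rewrite h1 in eT; [|lra].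
    destruct (C0l_sq _ iT) as [q1 q2]. assert (hz : pu (g1 t) = 0) by lra. rewrite hz in eT. nra.
Qed.

Definition Wf (t : R) := 1 - 2 / (exp t + 1).
Definition Zf (t : R) := 2 * exp t / (exp t + 1) ^ 2.

Lemma layer_sol : layer_solution 0 Wf Zf.
Proof.
  intro t. assert (he := exp_pos t). split; apply is_derive_Reals; unfold Wf, Zf.
  - auto_derive; [intro; lra|]. field. lra.
  - auto_derive; [intro; nra|]. field. lra.
Qed.

Lemma layer_sol2 : layer_solution 0 (fun t => - Wf t) (fun t => - Zf t).
Proof.
  intro t. destruct (layer_sol t) as [h1 h2]. split.
  - apply derivable_pt_lim_opp. exact h1.
  - replace (((- Wf t) ^ 3 - - Wf t) / 2 - 0) with (- ((Wf t ^ 3 - Wf t) / 2 - 0)) by field.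
    apply derivable_pt_lim_opp. exact h2.
Qed.

Lemma Wf_lims : lim_minfty Wf (-1) /\ lim_minfty Zf 0 /\ lim_pinfty Wf 1 /\ lim_pinfty Zf 0.
Proof.
  unfold Wf, Zf. repeat split; intros eps he.
  - exists (ln (eps/4)). intros t ht.
    assert (hE : exp t <= eps/4).
    { rewrite <- (exp_ln (eps/4)) by lra. destruct ht as [ht|ht]. left; apply exp_increasing; auto. rewrite ht; lra. }
    assert (hp := exp_pos t).
    rewrite Rabs_right.
    + apply Rmult_lt_reg_r with (exp t + 1); [lra|]. field_simplify; first [nra | intro; nra].
    + apply Rle_ge. apply Rmult_le_reg_r with (exp t + 1); [lra|]. field_simplify; first [nra | intro; nra].
  - exists (ln (eps/4)). intros t ht.
    assert (hE : exp t <= eps/4).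
    { rewrite <- (exp_ln (eps/4)) by lra. destruct ht as [ht|ht]. left; apply exp_increasing; auto. rewrite ht; lra. }
    assert (hp := exp_pos t).
    rewrite Rabs_right.
    + apply Rmult_lt_reg_r with ((exp t + 1)^2); [nra|]. field_simplify; first [nra | intro; nra].
    + apply Rle_ge. apply Rmult_le_reg_r with ((exp t + 1)^2); [nra|]. field_simplify; first [nra | intro; nra].
  - exists (2/eps). intros t ht.
    assert (hE : 2/eps < exp t).
    { assert (h1 := exp_ineq1_le t). assert (0 < 2/eps) by (apply Rdiv_lt_0_compat; lra). lra. }
    assert (hp := exp_pos t).
    rewrite Rabs_left.
    + assert (2 < eps * exp t).
      { apply Rmult_lt_compat_l with (r := eps) in hE; [|lra]. field_simplify in hE; lra. }
      apply Rmult_lt_reg_r with (exp t + 1); [lra|]. field_simplify; first [nra | intro; nra].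
    + assert (0 < 2 / (exp t + 1)) by (apply Rdiv_lt_0_compat; lra). lra.
  - exists (2/eps). intros t ht.
    assert (hE : 2/eps < exp t).
    { assert (h1 := exp_ineq1_le t). assert (0 < 2/eps) by (apply Rdiv_lt_0_compat; lra). lra. }
    assert (hp := exp_pos t).
    assert (2 < eps * exp t).
    { apply Rmult_lt_compat_l with (r := eps) in hE; [|lra]. field_simplify in hE; lra. }
    rewrite Rabs_right.
    + apply Rmult_lt_reg_r with ((exp t + 1)^2); [nra|]. field_simplify; first [nra | intro; nra].
    + apply Rle_ge. apply Rmult_le_reg_r with ((exp t + 1)^2); [nra|]. field_simplify; first [nra | intro; nra].
Qed.

Lemma fast1 : layer_heteroclinic 0 Wf Zf (-1) 1.
Proof.
  destruct Wf_lims as (a & b & c & d).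
  unfold layer_heteroclinic, layer_equilibrium. split; [exact layer_sol|]. repeat split; auto; try lra.
Qed.

Lemma lim_opp_p f l : lim_pinfty f l -> lim_pinfty (fun t => - f t) (- l).
Proof. intros h e he. destruct (h e he) as [T hT]. exists T. intros t ht.
  replace (- f t - - l) with (- (f t - l)) by ring. rewrite Rabs_Ropp. auto. Qed.
Lemma lim_opp_m f l : lim_minfty f l -> lim_minfty (fun t => - f t) (- l).
Proof. intros h e he. destruct (h e he) as [T hT]. exists T. intros t ht.
  replace (- f t - - l) with (- (f t - l)) by ring. rewrite Rabs_Ropp. auto. Qed.

Lemma fast2 : layer_heteroclinic 0 (fun t => - Wf t) (fun t => - Zf t) 1 (-1).
Proof.
  destruct Wf_lims as (a & b & c & d).
  unfold layer_heteroclinic, layer_equilibrium. split; [exact layer_sol2|]. repeat split; try lra.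
  - replace 1 with (- -1) by ring. apply lim_opp_m; auto.
  - replace 0 with (- 0) by ring. apply lim_opp_m; auto.
  - apply lim_opp_p; auto.
  - replace 0 with (- 0) by ring. apply lim_opp_p; auto.
Qed.

Lemma fast_H ub t : H ub 0 (Wf t) (Zf t) = (4 * ub^2 - 1) / 8 /\
                    H ub 0 (- Wf t) (- Zf t) = (4 * ub^2 - 1) / 8.
Proof. unfold H, Wf, Zf. assert (hp := exp_pos t). split; field; lra. Qed.

Section S.
Variable c : R.
Hypothesis hc : c < 1/24.

Definition qf p := sqrt (1 + 12 * p^2 - 24 * c).
Definition rf p := sqrt ((1 + qf p) / 3).
Definition vvf p := - rf p * (qf p - 2) / 6.

Lemma q_pos p : 0 < 1 + 12 * p^2 - 24 * c.
Proof. nra. Qed.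
Lemma qf_facts p : 0 < qf p /\ qf p * qf p = 1 + 12 * p^2 - 24 * c.
Proof. unfold qf. split. apply sqrt_lt_R0, q_pos. apply sqrt_sqrt. left; apply q_pos. Qed.
Lemma rf_facts p : 0 < rf p /\ rf p * rf p = (1 + qf p) / 3.
Proof. destruct (qf_facts p). unfold rf. split. apply sqrt_lt_R0; lra. apply sqrt_sqrt; lra. Qed.

Ltac fixsq p := change (sqrt (1 + 12 * (p * (p * 1)) + - (24 * c))) with (qf p) in *;
  change (sqrt ((1 + qf p) * / 3)) with (rf p) in *.

Lemma ex_rinv p : ex_derive (fun s => / rf s) p.
Proof.
  destruct (qf_facts p). destruct (rf_facts p).
  unfold rf, qf. auto_derive. fixsq p. repeat split; try nra.
Qed.

Lemma d_vv p : is_derive vvf p (- p / rf p).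
Proof.
  destruct (qf_facts p). destruct (rf_facts p).
  unfold vvf, rf, qf. auto_derive. 
  - fixsq p. repeat split; try nra.
  - fixsq p. change (sqrt (1 + 12 * p ^ 2 - 24 * c)) with (qf p). change (sqrt ((1 + qf p) / 3)) with (rf p).
    field_simplify; try (split; lra).
    + replace (rf p ^ 2) with ((1 + qf p)/3) by (rewrite <- H2; ring). field. lra.
    + lra.
Qed.

Definition Ff x := RInt (fun s => / rf s) 0 x.

Lemma cont_rinv z : continuous (fun s => / rf s) z.
Proof. apply (ex_derive_continuous (fun s => / rf s)), ex_rinv. Qed.

Lemma d_F x : derivable_pt_lim Ff x (/ rf x).
Proof.
  apply is_derive_Reals. unfold Ff.
  apply (is_derive_RInt (fun s => / rf s) (fun x => RInt (fun s => / rf s) 0 x) 0 x).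
  - apply filter_forall. intro b. exact (RInt_correct _ _ _ (ex_RInt_continuous _ _ _ (fun z _ => cont_rinv z))).
  - apply cont_rinv.
Qed.

Lemma F_incr x y : x < y -> Ff x < Ff y.
Proof.
  intro h. destruct (MVT_cor2 Ff (fun s => / rf s) x y h (fun c _ => d_F c)) as [z [hz _]].
  destruct (rf_facts z). assert (0 < / rf z) by (apply Rinv_0_lt_compat; lra). nra.
Qed.

Lemma F_cont x : continuity_pt Ff x.
Proof. apply derivable_continuous_pt. exists (/ rf x). apply d_F. Qed.

Lemma F_inj_le x y : Ff x <= Ff y -> x <= y.
Proof. intro h. destruct (Rle_or_lt x y); auto. apply F_incr in H. lra. Qed.

Lemma inverse lb ub : lb < ub -> exists P : R -> R,
  (forall t, Ff lb <= t <= Ff ub -> lb <= P t <= ub /\ Ff (P t) = t).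
Proof.
  intro hlu.
  exists (fun t => match Rle_dec (Ff lb) t, Rle_dec t (Ff ub) with
                   | left h1, left h2 => proj1_sig (f_interv_is_interv Ff lb ub t hlu (conj h1 h2) (fun x _ => F_cont x))
                   | _, _ => 0 end).
  intros t [h1 h2]. destruct (Rle_dec (Ff lb) t); [|contradiction].
  destruct (Rle_dec t (Ff ub)); [|contradiction].
  destruct (f_interv_is_interv Ff lb ub t hlu _ _) as [x hx]. exact hx.
Qed.

Lemma inverse_deriv lb ub P : lb < ub ->
  (forall t, Ff lb <= t <= Ff ub -> lb <= P t <= ub /\ Ff (P t) = t) ->
  forall t, Ff lb < t < Ff ub -> derivable_pt_lim P t (rf (P t)).
Proof.
  intros hlu hP t ht.
  assert (hFl := F_incr _ _ hlu).
  assert (Pl : P (Ff lb) = lb).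
  { destruct (hP (Ff lb) ltac:(lra)) as [h1 h2]. apply Rle_antisym; [|lra].
    apply F_inj_le. lra. }
  assert (Pu : P (Ff ub) = ub).
  { destruct (hP (Ff ub) ltac:(lra)) as [h1 h2]. apply Rle_antisym; [lra|].
    apply F_inj_le. lra. }
  assert (Prf : forall a, P (Ff lb) <= a <= P (Ff ub) -> derivable_pt Ff a).
  { intros a _. exists (/ rf a). apply d_F. }
  assert (Prg : continuity_pt P t).
  { apply (continuity_pt_recip_interv Ff P lb ub hlu).
    - intros; apply F_incr; lra.
    - intros x h1 h2. unfold comp, id. apply hP. lra.
    - intros x h1 h2. apply hP. lra.
    - intros; apply F_cont.
    - exact ht. }
  assert (Pinc : P (Ff lb) <= P t <= P (Ff ub)).
  { rewrite Pl, Pu. apply hP. lra. }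
  assert (hd := derive_pt_eq_0 Ff (P t) (/ rf (P t)) (Prf (P t) Pinc) (d_F _)).
  destruct (rf_facts (P t)).
  assert (hne : derive_pt Ff (P t) (Prf (P t) Pinc) <> 0).
  { rewrite hd. apply Rinv_neq_0_compat. lra. }
  assert (h := derivable_pt_lim_recip_interv Ff P (Ff lb) (Ff ub) t Prf Prg hFl ht Pinc
     (fun x hx => proj2 (hP x hx)) hne).
  rewrite hd in h. replace (rf (P t)) with (1 / / rf (P t)) by (field; lra). exact h.
Qed.

End S.

Lemma H_slow c (hc : c < 1/24) p : H (- p) (vvf c p) (- rf c p) 0 = c /\ H p (- vvf c p) (rf c p) 0 = c.
Proof.
  destruct (qf_facts c hc p) as [q1 q2]. destruct (rf_facts c hc p) as [r1 r2].
  unfold H, vvf. set (q := qf c p) in *. set (r := rf c p) in *.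
  split; nra.
Qed.

Lemma C0_slow c (hc : c < 1/24) p :
  in_C0l (mkpt (- p) (vvf c p) (- rf c p) 0) /\ in_C0r (mkpt p (- vvf c p) (rf c p) 0).
Proof.
  destruct (qf_facts c hc p) as [q1 q2]. destruct (rf_facts c hc p) as [r1 r2].
  destruct s3 as [s1 s2].
  unfold in_C0l, in_C0r, in_C0, vvf; simpl. set (q := qf c p) in *. set (r := rf c p) in *.
  assert (r > 1 / sqrt 3) by nra.
  repeat split; try nra.
Qed.

Lemma ends c (hc : c < 1/24) (hc2 : - (1/8) < c) :
  let ub0 := sqrt ((8 * c + 1) / 4) in
  0 < ub0 /\ rf c ub0 = 1 /\ rf c (- ub0) = 1 /\ vvf c ub0 = 0 /\ vvf c (- ub0) = 0
  /\ H ub0 0 (Wf 0) (Zf 0) = c /\ ub0 * ub0 = (8 * c + 1) / 4.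
Proof.
  intro ub0. assert (h0 : 0 < ub0) by (apply sqrt_lt_R0; lra).
  assert (h1 : ub0 * ub0 = (8 * c + 1) / 4) by (apply sqrt_sqrt; lra).
  assert (hq : forall p, p * p = ub0 * ub0 -> qf c p = 2).
  { intros p hp. unfold qf. replace (1 + 12 * p ^ 2 - 24 * c) with (2 * 2) by nra.
    apply sqrt_square; lra. }
  assert (hr : forall p, p * p = ub0 * ub0 -> rf c p = 1).
  { intros p hp. unfold rf. rewrite (hq p hp). replace ((1 + 2) / 3) with 1 by field. apply sqrt_1. }
  assert (e1 : ub0 * ub0 = ub0 * ub0) by ring. assert (e2 : (- ub0) * (- ub0) = ub0 * ub0) by ring.
  unfold vvf. rewrite (hq _ e1), (hq _ e2), (hr _ e1), (hr _ e2).
  repeat split; try lra; try ring.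
  destruct (fast_H ub0 0) as [f1 _]. rewrite f1. nra.
Qed.

Lemma F_le c (hc : c < 1/24) x y : x <= y -> Ff c x <= Ff c y.
Proof. intros [h|h]. left; apply F_incr; auto. subst; lra. Qed.

Lemma sufficiency mu : - (1 / 8) < mu /\ mu < 1 / 24 -> singular_periodic_orbit_2slow_2fast mu.
Proof.
  intros [hm1 hm2].
  destruct (ends mu hm2 hm1) as (u0 & rp & rm & vp & vm & Hf & uu).
  set (ub0 := sqrt ((8 * mu + 1) / 4)) in *.
  set (lb := - ub0 - 1). set (ub := ub0 + 1).
  assert (hlu : lb < ub) by (unfold lb, ub; lra).
  destruct (inverse mu hm2 lb ub hlu) as [P hP].
  assert (PF : forall x, lb <= x <= ub -> P (Ff mu x) = x).
  { intros x hx. assert (hh : Ff mu lb <= Ff mu x <= Ff mu ub) by (split; apply F_le; lra).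
    destruct (hP _ hh) as [h1 h2].
    apply Rle_antisym; apply (F_inj_le mu hm2); lra. }
  set (a1 := Ff mu (- ub0)). set (b1 := Ff mu ub0).
  assert (Pa : P a1 = - ub0) by (apply PF; unfold lb, ub; lra).
  assert (Pb : P b1 = ub0) by (apply PF; unfold lb, ub; lra).
  assert (ab : a1 < b1) by (apply F_incr; lra).
  assert (la : Ff mu lb < a1) by (apply F_incr; unfold lb; lra).
  assert (lb' : b1 < Ff mu ub) by (apply F_incr; unfold ub; lra).
  assert (dP : forall t, a1 <= t <= b1 -> derivable_pt_lim P t (rf mu (P t))).
  { intros t ht. apply (inverse_deriv mu hm2 lb ub P hlu hP). lra. }
  assert (dV : forall t, a1 <= t <= b1 -> derivable_pt_lim (fun s => vvf mu (P s)) t (- P t)).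
  { intros t ht. destruct (rf_facts mu hm2 (P t)).
    replace (- P t) with ((- P t / rf mu (P t)) * rf mu (P t)) by (field; lra).
    apply (derivable_pt_lim_comp P (vvf mu)). apply dP; auto.
    apply is_derive_Reals. apply d_vv. exact hm2. }
  set (g1 := fun t => mkpt (- P t) (vvf mu (P t)) (- rf mu (P t)) 0).
  set (g2 := fun t => mkpt (P t) (- vvf mu (P t)) (rf mu (P t)) 0).
  assert (S1 : reduced_segment a1 b1 g1).
  { split; [exact ab|]. intros t ht. unfold g1; simpl. split; [|split].
    - exact (proj1 (proj1 (C0_slow mu hm2 (P t)))).
    - apply (derivable_pt_lim_opp P). apply dP; auto.
    - apply dV; auto. }
  assert (S2 : reduced_segment a1 b1 g2).
  { split; [exact ab|]. intros t ht. unfold g2; simpl. split; [|split].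
    - exact (proj1 (proj2 (C0_slow mu hm2 (P t)))).
    - apply dP; auto.
    - replace (P t) with (- - P t) by ring. exact (derivable_pt_lim_opp (fun s => vvf mu (P s)) t (- P t) (dV t ht)). }
  assert (L1 : forall t, a1 <= t <= b1 -> in_C0l (g1 t)) by (intros; exact (proj1 (C0_slow mu hm2 _))).
  assert (L2 : forall t, a1 <= t <= b1 -> in_C0r (g2 t)) by (intros; exact (proj2 (C0_slow mu hm2 _))).
  assert (H1 : forall t, a1 <= t <= b1 -> Hp (g1 t) = mu) by (intros; unfold Hp; simpl; exact (proj1 (H_slow mu hm2 _))).
  assert (H2 : forall t, a1 <= t <= b1 -> Hp (g2 t) = mu) by (intros; unfold Hp; simpl; exact (proj2 (H_slow mu hm2 _))).
  exists a1, b1, a1, b1, g1, g2, (- ub0), 0, ub0, 0, Wf, Zf, (fun t => - Wf t), (fun t => - Zf t).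
  split; [exact S1|]. split; [exact S2|]. split; [exact L1|]. split; [exact L2|].
  split. { unfold g1, g2; simpl. rewrite Pa, Pb, rp, rm. replace (- (1)) with (-1) by ring. exact fast1. }
  unfold g1, g2; simpl. rewrite Pa, Pb, vp, vm.
  split; [ring|]. split; [ring|]. split; [ring|]. split; [ring|].
  split. { rewrite rp, rm. replace (- (1)) with (-1) by ring. exact fast2. }
  split; [ring|]. split; [ring|]. split; [ring|]. split; [ring|].
  split; [exact H1|]. split; [exact H2|].
  split; intro t; destruct (fast_H ub0 t) as [f1 f2]; destruct (fast_H ub0 0) as [f3 _].
  - destruct (fast_H (- ub0) t) as [f4 _]. rewrite f4. nra.
  - cbv beta. rewrite f2. nra.
Qed.

Theorem proposition1 (mu : R) :
  singular_periodic_orbit_2slow_2fast mu <-> (- (1 / 8) < mu /\ mu < 1 / 24).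
Proof.
  split; [apply necessity | apply sufficiency].
Qed.
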